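(* Let $\mathcal{R}=\{f_1,\dots,f_m\}$ be the set of area inequalities of a Lagrangian diagram with crossings $q_1,\dots,q_n$, each $f_i$ of the form $\sum_{j=1}^n\alpha_{i,j}h(q_j)>0$ with $\alpha_{i,j}\in\{-2,-1,0,1,2\}$. Suppose the flooding algorithm succeeds, producing tiers $T_1,\dots,T_M$. Define integers $h_M=1$ and $h_k=1+\sum_{i=k+1}^M 2h_i|T_i|$ for $k=M-1,\dots,1$. Then assigning height $h(q)=h_k$ to each crossing $q\in T_k$, for $1\le k\le M$, gives a valid height assignment for the Lagrangian diagram, i.e. all inequalities in $\mathcal{R}$ are satisfied.
   Context: For a Lagrangian diagram (knot diagram planar isotopic to the Lagrangian projection $(x,y,z)\mapsto(x,y)$ of a Legendrian knot in $(\mathbb{R}^3, dz-y\,dx)$), an area patch is a bounded component of the complement of the diagram. Traversing the boundary of a patch $P$ with the boundary orientation, a corner where one passes from an understrand to an overstrand gets positive Reeb sign, other corners negative Reeb sign. The area inequality of $P$ is: the sum over corners of $P$ of (Reeb sign)$\cdot h(\text{crossing})$ is $>0$ (a crossing may appear with multiplicity, hence coefficients in $\{-2,\dots,2\}$); these form $\mathcal{R}$. Flooding algorithm: start with $\mathcal{R}'=\mathcal{R}$ and $k=1$. (i) Let $T_k=\{q_j:\alpha_{i,j}\ge0$ for every $f_i\in\mathcal{R}'\}$ among crossings not yet assigned to a tier. (ii) If $T_k=\emptyset$ the algorithm fails; otherwise, for each $q_j\in T_k$ remove from $\mathcal{R}'$ every $f_i$ with $\alpha_{i,j}>0$. (iii)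 If $\mathcal{R}'\ne\emptyset$, increase $k$ by one and return to (i); if $\mathcal{R}'=\emptyset$, let $T_{k+1}$ be the set of crossings in no earlier tier and $M=k+1$; the algorithm succeeds. The tiers partition $\{q_1,\dots,q_n\}$, and $|T_i|$ denotes the cardinality of $T_i$. *)

(* Defs.v *)
From mathcomp Require Import all_boot all_order all_algebra.
Set Implicit Arguments. Unset Strict Implicit. Unset Printing Implicit Defensive.
Import Order.TTheory GRing.Theory Num.Theory.
Local Open Scope ring_scope.

(* Crossings q_1..q_n are indexed by 'I_n, area inequalities f_1..f_m by 'I_m.
   The inequality f_i reads  \sum_j alpha i j * h(q_j) > 0. *)

(* Rp = current R' (set of remaining inequalities),
   U  = crossings not yet assigned to a tier. *)
Fixpoint flood_aux (m n : nat) (alpha : 'I_m -> 'I_n -> int) (fuel : nat)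
    (Rp : {set 'I_m}) (U : {set 'I_n}) : option (seq {set 'I_n}) :=
  match fuel with
  | 0%N => None
  | fuel'.+1 =>
    let T := [set j in U | [forall i in Rp, (0 <= alpha i j)%R]] in
    if T == set0 then None
    else
      let Rp' := Rp :\: [set i in Rp | [exists j in T, (0 < alpha i j)%R]] in
      let U' := U :\: T in
      if Rp' == set0 then Some [:: T; U']
      else match flood_aux alpha fuel' Rp' U' with
           | None => None
           | Some ts => Some (T :: ts)
           end
  end.

(* Each successful round assigns a nonempty tier, so at most
   n rounds can succeed before the algorithm fails; fuel n.+1 never truncates it. *)
Definition flooding (m n : nat) (alpha : 'I_m -> 'I_n -> int)
  : option (seq {set 'I_n}) :=
  flood_aux alpha n.+1 [set: 'I_m] [set: 'I_n].

(* Given the tier sizes |T_1|,...,|T_M|, the heights h_1,...,h_M with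
   h_k = 1 + \sum_{i=k+1}^M 2 h_i |T_i|  (so h_M = 1). *)
Fixpoint tier_heights (sizes : seq nat) : seq int :=
  match sizes with
  | [::] => [::]
  | _ :: cs =>
    let hs := tier_heights cs in
    (1 + \sum_(p <- zip hs cs) 2 * p.1 * (p.2)%:Z) :: hs
  end.

(* Index (0-based) of the tier containing q. *)
Definition tier_index (n : nat) (tiers : seq {set 'I_n}) (q : 'I_n) : nat :=
  find (fun T : {set 'I_n} => q \in T) tiers.

Definition flood_height (n : nat) (tiers : seq {set 'I_n}) (q : 'I_n) : int :=
  nth 0 (tier_heights (map (fun T : {set 'I_n} => #|T|) tiers)) (tier_index tiers q).

(* Main.v *)
Require Import Defs.
From mathcomp Require Import all_boot all_order all_algebra.
Import Order.TTheory GRing.Theory Num.Theory.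
Local Open Scope ring_scope.

Definition Sum2 (cs : seq nat) : int :=
  \sum_(p <- zip (tier_heights cs) cs) 2 * p.1 * (p.2)%:Z.

Lemma Sum2_nil : Sum2 [::] = 0.
Proof. by rewrite /Sum2 /= big_nil. Qed.

Lemma Sum2_cons c cs : Sum2 (c :: cs) = 2 * (1 + Sum2 cs) * c%:Z + Sum2 cs.
Proof. by rewrite /Sum2 /= big_cons. Qed.

Lemma Sum2_ge0 cs : 0 <= Sum2 cs.
Proof.
elim: cs => [|c cs IH]; first by rewrite Sum2_nil.
rewrite Sum2_cons addr_ge0 // !mulr_ge0 // addr_ge0 //.
Qed.

Lemma fh_ge0 n (ts : seq {set 'I_n}) j : 0 <= flood_height ts j.
Proof.
elim: ts => [|T ts IH]; first by rewrite /flood_height /= ?nth_nil.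
rewrite /flood_height /tier_index /=.
case: (j \in T) => /=; first by rewrite addr_ge0 // -/(Sum2 _) Sum2_ge0.
exact: IH.
Qed.

Lemma fh_in n (T : {set 'I_n}) (ts : seq {set 'I_n}) j : j \in T ->
  flood_height (T :: ts) j = 1 + Sum2 (map (fun T : {set 'I_n} => #|T|) ts).
Proof. by move=> jT; rewrite /flood_height /tier_index /= jT. Qed.

Lemma fh_notin n (T : {set 'I_n}) (ts : seq {set 'I_n}) j : j \notin T ->
  flood_height (T :: ts) j = flood_height ts j.
Proof. by move=> /negbTE jT; rewrite /flood_height /tier_index /= jT. Qed.

Lemma mulrnz (x : int) (k : nat) : x *+ k = x * k%:Z.
Proof. by rewrite -mulr_natr natz. Qed.

Lemma bound n (ts : seq {set 'I_n}) (P : pred 'I_n) :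
  (forall j, P j -> has (fun X : {set 'I_n} => j \in X) ts) ->
  \sum_(j | P j) 2 * flood_height ts j <= Sum2 (map (fun T : {set 'I_n} => #|T|) ts).
Proof.
elim: ts P => [|T ts IH] P cov.
  rewrite big1 ?Sum2_nil // => j /cov //.
rewrite [map _ _]/= Sum2_cons.
set S := Sum2 _.
rewrite (bigID (fun j => j \in T)) /= lerD //.
  rewrite (eq_bigr (fun _ => 2 * (1 + S))); last first.
    by move=> j /andP[_ /fh_in ->].
  rewrite (@le_trans _ _ (\sum_(j | j \in T) 2 * (1 + S))) //.
    rewrite [X in _ <= X](bigID P) /= -[X in X <= _]addr0 lerD //.
        by rewrite (eq_bigl (fun i => (i \in T) && P i)) // => j; rewrite andbC.
    by apply: sumr_ge0 => j _; rewrite mulr_ge0 // addr_ge0 // Sum2_ge0.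
  by rewrite sumr_const mulrnz.
rewrite (@eq_bigr _ _ _ _ _ _ (fun j => 2 * flood_height (T :: ts) j) (fun j => 2 * flood_height ts j)); last first.
  by move=> j /andP[_ /fh_notin ->].
apply: IH => j /andP[/cov /= + jT]; by rewrite (negbTE jT).
Qed.

Section Main.
Variables (m n : nat) (alpha : 'I_m -> 'I_n -> int).
Hypothesis halpha : forall i j, -2 <= alpha i j <= 2.

Lemma cover fuel Rp U ts : flood_aux alpha fuel Rp U = Some ts ->
  forall j, j \in U -> has (fun X : {set 'I_n} => j \in X) ts.
Proof.
elim: fuel Rp U ts => [//|fuel IH] Rp U ts /=.
set T := [set j in U | _].
case: ifP => // _.
set Rp' := _ :\: _; set U' := U :\: T.
case: ifP => [_ [<-] | _].
  move=> j jU /=; rewrite /U' in_setD jU andbT orbF.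
  by case: (j \in T).
case E: (flood_aux _ _ _ _) => [ts'|] // [<-] j jU /=.
case jT: (j \in T) => //=.
by apply: (IH _ _ _ E); rewrite /U' in_setD jT jU.
Qed.

Lemma main fuel Rp U ts : flood_aux alpha fuel Rp U = Some ts ->
  forall i, i \in Rp -> 0 < \sum_(j in U) alpha i j * flood_height ts j.
Proof.
elim: fuel Rp U ts => [//|fuel IH] Rp U ts /=.
set T := [set j in U | _].
case: ifP => // _.
set Rp' := _ :\: _; set U' := U :\: T.
move=> H i iRp.
have [ts' [-> cov rec]] : exists ts', [/\ ts = T :: ts',
   (forall j, j \in U' -> has (fun X : {set 'I_n} => j \in X) ts') &
   (i \in Rp' -> 0 < \sum_(j in U') alpha i j * flood_height ts' j)].
  move: H; case: ifP => [/eqP R0 [<-] | _].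
    exists [:: U']; split => //; first by move=> j jU /=; rewrite jU.
    by rewrite R0 inE.
  case E: (flood_aux _ _ _ _) => [ts'|] // [<-].
  exists ts'; split => //; first exact: (cover _ _ _ _ E).
  exact: (IH _ _ _ E).
have Tsub : forall j, j \in T -> (j \in U) && (0 <= alpha i j).
  move=> j; rewrite inE => /andP[-> /forallP /(_ i)]; by rewrite iRp.
rewrite (bigID (fun j => j \in T)) /=.
have -> : \sum_(i0 in U | i0 \notin T) alpha i i0 * flood_height (T :: ts') i0
        = \sum_(j in U') alpha i j * flood_height ts' j.
  rewrite (eq_bigl (fun j => j \in U')); last by move=> j; rewrite in_setD andbC.
  by apply: eq_bigr => j; rewrite in_setD => /andP[/fh_notin -> _].
case: (boolP (i \in Rp')) => iRp'.
  rewrite big1 ?add0r; first exact: rec.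
  move=> j /andP[_ jT]; move: iRp'; rewrite in_setD iRp andbT inE iRp /=.
  move=> /existsPn /(_ j); rewrite jT /= => /negbTE.
  have /andP[_] := Tsub j jT; rewrite le_eqVlt => /orP[/eqP <- | ->] //.
  by rewrite mul0r.
move: iRp'; rewrite in_setD iRp andbT inE iRp /= negbK => /existsP[j0 /andP[j0T aj0]].
set S := Sum2 (map (fun X : {set 'I_n} => #|X|) ts').
have A : 1 + S <= \sum_(i0 in U | i0 \in T) alpha i i0 * flood_height (T :: ts') i0.
  rewrite (eq_bigr (fun j => alpha i j * (1 + S))); last first.
    by move=> j /andP[_ /fh_in ->].
  have j0U : (j0 \in U) && (j0 \in T) by rewrite j0T andbT; case/andP: (Tsub j0 j0T).
  rewrite (bigD1 j0) //= -[X in X <= _]addr0 lerD //.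
    rewrite -[X in X <= _]mul1r ler_wpM2r //; first by rewrite addr_ge0 // Sum2_ge0.
  apply: sumr_ge0 => j /andP[/andP[_ jT] _]; rewrite mulr_ge0 //.
    by case/andP: (Tsub j jT).
  by rewrite addr_ge0 // Sum2_ge0.
have B : - S <= \sum_(j in U') alpha i j * flood_height ts' j.
  rewrite (@le_trans _ _ (\sum_(j in U') - (2 * flood_height ts' j))) //.
    by rewrite sumrN lerN2; apply: bound.
  apply: ler_sum => j _; rewrite -mulNr ler_wpM2r ?fh_ge0 //.
  by case/andP: (halpha i j).
apply: (lt_le_trans _ (lerD A B)).
by rewrite addrK.
Qed.
End Main.

Theorem proposition5p1 (m n : nat) (alpha : 'I_m -> 'I_n -> int)
  (halpha : forall i j, -2 <= alpha i j <= 2)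
  (tiers : seq {set 'I_n})
  (hsucc : flooding alpha = Some tiers) :
  forall i : 'I_m, 0 < \sum_(j < n) alpha i j * flood_height tiers j.
Proof.
move=> i; have := @main m n alpha halpha _ _ _ _ hsucc i (in_setT i).
by rewrite (eq_bigl (fun j => true)) // => j; rewrite in_setT.
Qed.
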